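(* Let $\mu$ be the Cauchy distribution $d\mu(x)=\frac1\pi\frac{dx}{1+x^2}$ and $t>0$. Then for $u\in\mathbb R$, \[\frac{d\psi_{t}}{du}(u)=\frac{t+4v^2(1+v)^2}{(1+v)(t+2v^2(1+v))},\qquad v=v_{t}(u).\]
   Context: $v_t(u)=\inf\{v>0:\int\frac{d\mu(x)}{(u-x)^2+v^2}\le\frac1t\}$; $H_t(z)=z+t\int\frac{d\mu(x)}{z-x}$; $\psi_t(u)=H_t(u+iv_t(u))=u+t\int\frac{(u-x)\,d\mu(x)}{(u-x)^2+v_t(u)^2}$. *)

(* Defs.v *)
From HB Require Import structures.
From mathcomp Require Import all_boot all_order all_algebra.
From mathcomp Require Import all_classical all_reals all_analysis.
Set Implicit Arguments. Unset Strict Implicit. Unset Printing Implicit Defensive.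
Import Order.TTheory GRing.Theory Num.Theory.
Local Open Scope classical_set_scope.
Local Open Scope ring_scope.

Definition cauchy_density {R : realType} (x : R) : R := pi^-1 / (1 + x ^+ 2).

Definition cauchy_eint {R : realType} (f : R -> R) : \bar R :=
  (\int[@lebesgue_measure R]_(x in [set: R]) (f x * cauchy_density x)%:E)%E.

Definition cauchy_int {R : realType} (f : R -> R) : R :=
  Rintegral (@lebesgue_measure R) [set: R] (fun x => f x * cauchy_density x).

Definition vt {R : realType} (t u : R) : R :=
  inf [set v : R | 0 < v /\
         (cauchy_eint (fun x : R => ((u - x) ^+ 2 + v ^+ 2)^-1)%R <= (t^-1)%:E)%E].

Definition psi {R : realType} (t u : R) : R :=
  u + t * cauchy_int (fun x => (u - x) / ((u - x) ^+ 2 + vt t u ^+ 2)).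

(* Main.v *)
Require Import Defs.
From HB Require Import structures.
From mathcomp Require Import all_boot all_order all_algebra.
From mathcomp Require Import all_classical all_reals all_analysis.
From mathcomp Require Import measurable_realfun.
From mathcomp Require Import ring lra.
Set Implicit Arguments. Unset Strict Implicit. Unset Printing Implicit Defensive.
Import Order.TTheory GRing.Theory Num.Theory.
Import numFieldNormedType.Exports.
Local Open Scope classical_set_scope.
Local Open Scope ring_scope.
Section DL.
Lemma scaleRE (R : realType) (a b : R) : a *: b = a * b. Proof. by []. Qed.
Lemma dM {R : realType} {f g : R -> R} {x df dg : R} : is_derive x 1 f df -> is_derive x 1 g dg ->
  is_derive x 1 (fun y => f y * g y) (f x * dg + g x * df).
Proof. move=> h1 h2; exact: (is_deriveM h1 h2). Qed.
Lemma dD {R : realType} {f g : R -> R} {x df dg : R} : is_derive x 1 f df -> is_derive x 1 g dg ->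
  is_derive x 1 (fun y => f y + g y) (df + dg).
Proof. move=> h1 h2; exact: (is_deriveD h1 h2). Qed.
Lemma dB {R : realType} {f g : R -> R} {x df dg : R} : is_derive x 1 f df -> is_derive x 1 g dg ->
  is_derive x 1 (fun y => f y - g y) (df - dg).
Proof. move=> h1 h2; exact: (is_deriveB h1 h2). Qed.
Lemma dV {R : realType} {f : R -> R} {x df : R} : f x != 0 -> is_derive x 1 f df ->
  is_derive x 1 (fun y => (f y)^-1) (- df / (f x) ^+ 2).
Proof. move=> h1 h2; apply: (is_derive_eq (is_deriveV h1 h2)).
change ((- f x ^- 2) * df = - df / f x ^+ 2); ring. Qed.
Lemma dC {R : realType} (c x : R) : is_derive x 1 (fun _ : R => c) 0.
Proof. exact: is_derive_cst. Qed.
Lemma dI {R : realType} (x : R) : is_derive x 1 (fun y : R => y) 1.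
Proof. exact: is_derive_id. Qed.
Lemma dO {R : realType} {f g : R -> R} {x df dg : R} : is_derive (g x) 1 f df -> is_derive x 1 g dg ->
  is_derive x 1 (fun y => f (g y)) (df * dg).
Proof. move=> h1 h2; exact: (is_derive1_comp h1 h2). Qed.
Lemma dE {R : realType} (f : R -> R) (x df df' : R) : is_derive x 1 f df -> df = df' -> is_derive x 1 f df'.
Proof. by move=> h <-. Qed.
End DL.
Lemma dS {R : realType} {f : R -> R} {x df : R} (c : R) : is_derive x 1 f df ->
  is_derive x 1 (fun y => c * f y) (c * df).
Proof. move=> h; eapply dE; first exact (dM (dC c x) h). by rewrite mulr0 addr0. Qed.
Lemma dX2 {R : realType} {f : R -> R} {x df : R} : is_derive x 1 f df ->
  is_derive x 1 (fun y => f y ^+ 2) (2 * f x * df).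
Proof.
move=> h; have e : (fun y => f y ^+ 2) = (fun y => f y * f y) by apply: funext => y; rewrite expr2.
rewrite e; eapply dE; first exact (dM h h). ring.
Qed.
Lemma dLn {R : realType} {f : R -> R} {x df : R} : 0 < f x -> is_derive x 1 f df ->
  is_derive x 1 (fun y => ln (f y)) (df / f x).
Proof.
move=> h0 h; eapply dE; first exact (dO (is_derive1_ln h0) h). by rewrite mulrC.
Qed.
Lemma dAt {R : realType} {f : R -> R} {x df : R} : is_derive x 1 f df ->
  is_derive x 1 (fun y => atan (f y)) (df / (1 + f x ^+ 2)).
Proof.
move=> h; eapply dE; first exact (dO (is_derive1_atan (f x)) h). by rewrite mulrC.
Qed.
Lemma inv_cvgy {R : realType} : (fun x : R => x^-1) x @[x --> +oo] --> (0:R).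
Proof.
apply/cvgr0Pnorm_lt => e e0.
near=> x.
have x0 : 0 < x by near: x; apply: nbhs_pinfty_gt; by rewrite num_real.
rewrite gtr0_norm ?invr_gt0 // -[e]invrK ltf_pV2 ?posrE ?invr_gt0 //.
near: x; apply: nbhs_pinfty_gt; by rewrite num_real.
Unshelve. all: by end_near.
Qed.

Lemma inv_cvgNy {R : realType} : (fun x : R => x^-1) x @[x --> -oo] --> (0:R).
Proof.
apply/cvgNy_compNP.
have -> : ((fun x : R => x^-1) \o -%R) = (fun x => - x^-1).
  by apply: funext => x /=; rewrite invrN.
have := cvgN (@inv_cvgy R); rewrite oppr0; exact.
Qed.

Lemma lim_inv {R : realType} (r g : R -> R) : {for 0, continuous r} ->
  (forall x, x != 0 -> g x = r x^-1) ->
  g x @[x --> +oo] --> r 0 /\ g x @[x --> -oo] --> r 0.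
Proof.
move=> cr hg; split.
- apply: (@cvg_trans _ ((r \o GRing.inv) x @[x --> +oo])).
    apply: near_eq_cvg; near=> x.
    have x0 : 0 < x by near: x; apply: nbhs_pinfty_gt; by rewrite num_real.
    by rewrite /= hg // gt_eqF.
  apply: (@cvg_comp _ _ _ GRing.inv r _ (nbhs (0:R))); [exact: inv_cvgy | exact: cr].
- apply: (@cvg_trans _ ((r \o GRing.inv) x @[x --> -oo])).
    apply: near_eq_cvg; near=> x.
    have x0 : x < 0 by near: x; apply: nbhs_ninfty_lt; by rewrite num_real.
    by rewrite /= hg // lt_eqF.
  apply: (@cvg_comp _ _ _ GRing.inv r _ (nbhs (0:R))); [exact: inv_cvgNy | exact: cr].
Unshelve. all: by end_near.
Qed.

Lemma atan_lims {R : realType} (a b : R) : 0 < b ->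
  atan ((x - a) / b) @[x --> +oo] --> pi / 2 /\
  atan ((x - a) / b) @[x --> -oo] --> - (pi / 2).
Proof.
move=> b0.
have gen : forall c : R, atan ((x - c) / b) @[x --> +oo] --> pi / 2.
  move=> c.
  apply: (@cvg_comp _ _ _ (fun x => (x - c) / b) atan _ (+oo : set_system R)); last exact: cvgy_atan.
  apply/cvgryPge => A; near=> x.
  rewrite ler_pdivlMr // lerBrDr.
  near: x; apply: nbhs_pinfty_ge; by rewrite num_real.

split; first exact: gen.
apply/cvgNy_compNP.
have -> : ((fun x => atan ((x - a) / b)) \o -%R) = (fun x => - atan ((x - - a) / b)).
  apply: funext => x /=; rewrite -atanN; congr atan; rewrite -mulNr; congr (_ / _).
  ring.
apply: cvgN; exact: gen.
Unshelve. all: by end_near.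
Qed.
Lemma der_cont {R : realType} (f : R -> R) (x df : R) : is_derive x 1 f df -> {for x, continuous f}.
Proof.
move=> [h _]; apply: differentiable_continuous; exact/derivable1_diffP.
Qed.

Lemma lnratio_lims {R : realType} (u v : R) : 0 < v ->
  (ln (1 + x ^+ 2) - ln ((x - u) ^+ 2 + v ^+ 2)) @[x --> +oo] --> (0:R) /\
  (ln (1 + x ^+ 2) - ln ((x - u) ^+ 2 + v ^+ 2)) @[x --> -oo] --> (0:R).
Proof.
move=> v0.
pose rr := fun y : R => (y * y + 1) * ((1 - u * y) * (1 - u * y) + (v * y) * (v * y))^-1.
have rr0 : rr 0 = 1 by rewrite /rr; field.
have crr : {for 0, continuous rr}.
  have n0 : (fun y : R => (1 - u * y) * (1 - u * y) + (v * y) * (v * y)) 0 != 0.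
    by rewrite /= !mulr0 subr0 addr0 mulr1 oner_neq0.
  apply: (@der_cont R rr 0 _).
have cr : {for 0, continuous (fun y => ln (rr y))}.
  apply: continuous_comp; first exact: crr.
  by rewrite rr0; apply: continuous_ln.
have := @lim_inv R (fun y => ln (rr y)) (fun x => ln (1 + x ^+ 2) - ln ((x - u) ^+ 2 + v ^+ 2)) cr.
rewrite /= rr0 ln1; apply.
move=> x x0.
have P0 : 0 < 1 + x ^+ 2 by have := sqr_ge0 x; lra.
have Q0 : 0 < (x - u) ^+ 2 + v ^+ 2.
  have := sqr_ge0 (x - u); have : 0 < v ^+ 2 by apply: exprn_gt0.
  lra.
rewrite -ln_div ?posrE //; congr ln; rewrite /rr; field.
by rewrite x0 -!expr2 gt_eqF.
Qed.
Lemma sq_pos {R : realType} (a v : R) : 0 < v -> 0 < a ^+ 2 + v ^+ 2.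
Proof. move=> v0; have := sqr_ge0 a; have : 0 < v ^+ 2 by apply: exprn_gt0. lra. Qed.

Lemma P_pos {R : realType} (x : R) : 0 < 1 + x ^+ 2.
Proof. have := sqr_ge0 x; lra. Qed.

Lemma der_dens {R : realType} (x : R) : exists d,
  is_derive x 1 (fun y : R => pi^-1 / (1 + y ^+ 2)) d.
Proof.
have nz : (fun y : R => 1 + y ^+ 2) x != 0 by rewrite /= gt_eqF // P_pos.
eexists; exact (dS pi^-1 (dV (f := fun y : R => 1 + y ^+ 2) nz (dD (dC 1 x) (dX2 (dI x))))).
Qed.

Lemma der_Qinv {R : realType} (u v x : R) : 0 < v -> exists d,
  is_derive x 1 (fun y : R => ((u - y) ^+ 2 + v ^+ 2)^-1) d.
Proof.
move=> v0.
have nz : (fun y : R => (u - y) ^+ 2 + v ^+ 2) x != 0 by rewrite /= gt_eqF // sq_pos.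
eexists; exact (dV (f := fun y : R => (u - y) ^+ 2 + v ^+ 2) nz (dD (dX2 (dB (dC u x) (dI x))) (dC (v ^+ 2) x))).
Qed.

Lemma cont_f1 {R : realType} (u v : R) : 0 < v ->
  continuous (fun x : R => ((u - x) ^+ 2 + v ^+ 2)^-1 * (pi^-1 / (1 + x ^+ 2))).
Proof.
move=> v0 x; have [d1 h1] := der_Qinv u x v0; have [d2 h2] := der_dens x.
exact: der_cont (dM h1 h2).
Qed.

Lemma cont_f2 {R : realType} (u v : R) : 0 < v ->
  continuous (fun x : R => (u - x) / ((u - x) ^+ 2 + v ^+ 2) * (pi^-1 / (1 + x ^+ 2))).
Proof.
move=> v0 x; have [d1 h1] := der_Qinv u x v0; have [d2 h2] := der_dens x.
exact: der_cont (dM (dM (dB (dC u x) (dI x)) h1) h2).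
Qed.

Lemma cont_dens {R : realType} : continuous (fun x : R => pi^-1 / (1 + x ^+ 2)).
Proof. move=> x; have [d2 h2] := der_dens x; exact: der_cont h2. Qed.
Lemma FTC_half {R : realType} (f F : R -> R) (l : R) :
  (forall x, 0 <= f x) -> continuous f -> (forall x : R, is_derive x 1 F (f x)) ->
  F x @[x --> +oo] --> l ->
  (\int[@lebesgue_measure R]_(x in `[0%R, +oo[) (f x)%:E = (l - F 0)%:E)%E.
Proof.
move=> f0 cf dF Fl.
rewrite EFinB; apply: ge0_continuous_FTC2y.
- by move=> x _; exact: f0.
- exact: continuous_subspaceT.
- exact: Fl.
- by move=> x _; apply: ex_derive; exact: dF.
- apply: cvg_at_right_filter.
  apply: differentiable_continuous; apply/derivable1_diffP; apply: ex_derive; exact: dF.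
- by move=> x _; rewrite derive1E; exact: derive_val.
Qed.

Lemma FTC_R {R : realType} (f F : R -> R) (lp lm : R) :
  (forall x, 0 <= f x) -> continuous f -> (forall x : R, is_derive x 1 F (f x)) ->
  F x @[x --> +oo] --> lp -> F x @[x --> -oo] --> lm ->
  (\int[@lebesgue_measure R]_(x in [set: R]) (f x)%:E = (lp - lm)%:E)%E.
Proof.
move=> f0 cf dF Fp Fm.
have mf : measurable_fun [set: R] f by exact: continuous_measurable_fun.
have mposnums : measurable [set x : R | 0 <= x]%R by rewrite -set_itvcy.
rewrite -(setUv [set x : R | 0 <= x]%R) ge0_integral_setU//= ; last 4 first.
  exact: measurableC.
  by apply/measurable_EFinP; rewrite setUv.
  by move=> x _; rewrite lee_fin.
  exact/disj_setPCl.
rewrite -set_itvcy// setCitvr.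
rewrite integral_itv_bndo_bndc; last exact/measurable_EFinP/measurable_funTS.

rewrite -{2}oppr0 ge0_integration_by_substitutionNy//; last first.
  exact: continuous_subspaceT.
rewrite (FTC_half f0 cf dF Fp).
have g0 : forall x, 0 <= (f \o -%R) x by move=> x; exact: f0.
have cg : continuous (f \o -%R).
  move=> x; apply: continuous_comp; [exact: oppr_continuous | exact: cf].
have dG : forall x : R, is_derive x 1 (fun x => - F (- x)) ((f \o -%R) x).
  move=> x; eapply dE; first exact (is_deriveN (dO (dF (- x)) (is_deriveNid x 1))).
  by rewrite /=; ring.
have Gl : (fun x => - F (- x)) x @[x --> +oo] --> - lm.
  apply: cvgN. by apply/cvgNy_compNP.
rewrite (FTC_half g0 cg dG Gl).
by rewrite oppr0 opprK -EFinD; congr EFin; ring.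
Qed.
Lemma int_of {R : realType} (f : R -> R) (r : R) : (forall x, 0 <= f x) -> continuous f ->
  (\int[@lebesgue_measure R]_(x in [set: R]) (f x)%:E = r%:E)%E ->
  (@lebesgue_measure R).-integrable [set: R] (EFin \o f).
Proof.
move=> f0 cf I; apply/integrableP; split.
  by apply/measurable_EFinP; exact: continuous_measurable_fun.
have -> : (\int[@lebesgue_measure R]_x `|(EFin \o f) x| = \int[@lebesgue_measure R]_x (f x)%:E)%E.
  apply: eq_integral => x _; rewrite /comp; first [by rewrite gee0_abs ?lee_fin | by rewrite abse_EFin ger0_norm | by rewrite normr_id ].
by rewrite I ltry.
Qed.

Lemma FTC_Rs {R : realType} (g d G D : R -> R) (lpG lmG lpD lmD : R) :
  (forall x, 0 <= g x + d x) -> (forall x, 0 <= d x) -> continuous g -> continuous d ->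
  (forall x : R, is_derive x 1 G (g x + d x)) -> (forall x : R, is_derive x 1 D (d x)) ->
  G x @[x --> +oo] --> lpG -> G x @[x --> -oo] --> lmG ->
  D x @[x --> +oo] --> lpD -> D x @[x --> -oo] --> lmD ->
  Rintegral (@lebesgue_measure R) [set: R] g = (lpG - lmG) - (lpD - lmD).
Proof.
move=> h0 d0 cg cd dG dD G1 G2 D1 D2.
have cgd : continuous (fun x => g x + d x).
  by move=> x; apply: (@continuousD _ _ _ g d x); [exact: cg | exact: cd].
have I1 := FTC_R h0 cgd dG G1 G2.
have I2 := FTC_R d0 cd dD D1 D2.
rewrite /Rintegral.
have -> : (\int[@lebesgue_measure R]_x (g x)%:E = \int[@lebesgue_measure R]_x ((g x + d x)%:E - (d x)%:E))%E.
  by apply: eq_integral => x _; rewrite -EFinB; congr EFin; ring.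
rewrite integralB_EFin //; last exact: int_of I2.
  by rewrite I1 I2 -EFinB.
exact: int_of I1.
Qed.
Lemma lD {R : realType} (F : set_system R) {FF : Filter F} (f g : R -> R) (a b : R) :
  f x @[x --> F] --> a -> g x @[x --> F] --> b -> (f x + g x) @[x --> F] --> a + b.
Proof. move=> h1 h2; exact: cvgD h1 h2. Qed.
Lemma lS {R : realType} (F : set_system R) {FF : Filter F} (f : R -> R) (c a : R) :
  f x @[x --> F] --> a -> (c * f x) @[x --> F] --> c * a.
Proof. move=> h; exact: cvgM (cvg_cst c) h. Qed.

Lemma lim_xP {R : realType} :
  (fun x : R => x / (1 + x ^+ 2)) x @[x --> +oo] --> (0:R) /\
  (fun x : R => x / (1 + x ^+ 2)) x @[x --> -oo] --> (0:R).
Proof.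
pose r := fun y : R => y * (y * y + 1)^-1.
have r0 : r 0 = 0 by rewrite /r mul0r.
have cr : {for 0, continuous r}.
  have nz : (fun y : R => y * y + 1) 0 != 0 by rewrite /= mul0r add0r oner_neq0.
  exact: der_cont (dM (dI 0) (dV (f := fun y : R => y * y + 1) nz (dD (dM (dI 0) (dI 0)) (dC 1 0)))).
have := @lim_inv R r (fun x : R => x / (1 + x ^+ 2)) cr.
rewrite r0; apply => x x0; rewrite /r; field.
by rewrite x0 -expr2 gt_eqF // P_pos.
Qed.

Lemma atan_lims0 {R : realType} :
  (@atan R) x @[x --> +oo] --> pi / 2 /\ (@atan R) x @[x --> -oo] --> - (pi / 2).
Proof.
have [h1 h2] := atan_lims 0 (ltr01 : (0:R) < 1).
have e : (fun x : R => atan ((x - 0) / 1)) = atan by apply: funext => x; rewrite subr0 divr1.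
by rewrite e in h1 h2.
Qed.

Lemma eint1 {R : realType} (u v : R) : 0 < v ->
  cauchy_eint (fun x => ((u - x) ^+ 2 + v ^+ 2)^-1) =
  ((1 + v) / (v * (u ^+ 2 + (1 + v) ^+ 2)))%:E.
Proof.
move=> v0; rewrite /cauchy_eint /cauchy_density.
have c1 := @cont_f1 R u v v0.
have [Ap0 Am0] := @atan_lims0 R.
have [Ap Am] := @atan_lims R u v v0.
have pi0 : 0 < pi :> R by exact: pi_gt0.
move: c1 Ap0 Am0 Ap Am pi0; generalize (@pi R) => p c1 Ap0 Am0 Ap Am p0.
have f0 : forall x : R, 0 <= ((u - x) ^+ 2 + v ^+ 2)^-1 * (p^-1 / (1 + x ^+ 2)).
  move=> x; apply: mulr_ge0; first by rewrite invr_ge0 ltW // sq_pos.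
  by apply: divr_ge0; [rewrite invr_ge0 ltW | exact: ltW (P_pos x)].
case: (boolP ((u == 0) && (v == 1))) => [/andP[/eqP u0 /eqP v1] | hK].
- subst u v.
  have [Lp Lm] := @lim_xP R.
  pose Phi := fun x : R => p^-1 * (2^-1 * (x / (1 + x ^+ 2) + atan x)).
  have dF : forall x : R, is_derive x 1 Phi (((0 - x) ^+ 2 + 1 ^+ 2)^-1 * (p^-1 / (1 + x ^+ 2))).
    move=> x.
    have nz : (fun y : R => 1 + y ^+ 2) x != 0 by rewrite /= gt_eqF // P_pos.
    eapply dE; first exact (dS p^-1 (dS 2^-1 (dD (dM (dI x) (dV (f := fun y : R => 1 + y ^+ 2) nz (dD (dC 1 x) (dX2 (dI x))))) (dAt (dI x))))).
    by rewrite /=; field; rewrite nz gt_eqF.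
  have Fp : Phi x @[x --> +oo] --> p^-1 * (2^-1 * (0 + p / 2)).
    rewrite /Phi; apply: lS; apply: lS; exact: lD Lp Ap0.
  have Fm : Phi x @[x --> -oo] --> p^-1 * (2^-1 * (0 + - (p / 2))).
    rewrite /Phi; apply: lS; apply: lS; exact: lD Lm Am0.
  rewrite (FTC_R f0 c1 dF Fp Fm); congr EFin; field; by rewrite gt_eqF.
- have K0 : 0 < (u ^+ 2 + v ^+ 2 - 1) ^+ 2 + 4 * u ^+ 2.
    have h1 := sqr_ge0 (u ^+ 2 + v ^+ 2 - 1); have h2 := sqr_ge0 u.
    case: (eqVneq u 0) => [u0|u0].
    + have v1 : v != 1 by move: hK; rewrite u0 eqxx.
      have : 0 < (u ^+ 2 + v ^+ 2 - 1) ^+ 2.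
        rewrite exprn_even_gt0 //= u0 expr0n add0r subr_eq0.
        by rewrite -(expr1n R 2) eqrXn2 // ltW.
      lra.
    + have : 0 < u ^+ 2 by rewrite exprn_even_gt0 //= u0.
      lra.
  pose a := u / ((u ^+ 2 + v ^+ 2 - 1) ^+ 2 + 4 * u ^+ 2).
  pose b := (u ^+ 2 + v ^+ 2 - 1) / ((u ^+ 2 + v ^+ 2 - 1) ^+ 2 + 4 * u ^+ 2).
  pose c := (u ^+ 2 - v ^+ 2 + 1) / (v * ((u ^+ 2 + v ^+ 2 - 1) ^+ 2 + 4 * u ^+ 2)).
  have [Lp Lm] := @lnratio_lims R u v v0.
  pose Phi := fun x : R => p^-1 * (a * (ln (1 + x ^+ 2) - ln ((x - u) ^+ 2 + v ^+ 2)) + b * atan x + c * atan ((x - u) / v)).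
  have dF : forall x : R, is_derive x 1 Phi (((u - x) ^+ 2 + v ^+ 2)^-1 * (p^-1 / (1 + x ^+ 2))).
    move=> x.
    have hxu := dB (dI x) (dC u x).
    have hP := dLn (f := fun y => 1 + y ^+ 2) (P_pos x) (dD (dC 1 x) (dX2 (dI x))).
    have hQ := dLn (f := fun y => (y - u) ^+ 2 + v ^+ 2) (sq_pos (x - u) v0) (dD (dX2 hxu) (dC (v ^+ 2) x)).
    have h1 := dAt (dI x).
    have h2 := dAt (dM hxu (dC v^-1 x)).
    eapply dE; first exact (dS p^-1 (dD (dD (dS a (dB hP hQ)) (dS b h1)) (dS c h2))).
    rewrite /= /a /b /c; field.
    by rewrite (gt_eqF (P_pos x)) (gt_eqF p0) (gt_eqF (sq_pos (u - x) v0)) (gt_eqF v0) (gt_eqF K0).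
  have Fp : Phi x @[x --> +oo] --> p^-1 * (a * 0 + b * (p / 2) + c * (p / 2)).
    rewrite /Phi; apply: lS; apply: lD; [apply: lD; [exact: lS Lp | exact: lS Ap0] | exact: lS Ap].
  have Fm : Phi x @[x --> -oo] --> p^-1 * (a * 0 + b * - (p / 2) + c * - (p / 2)).
    rewrite /Phi; apply: lS; apply: lD; [apply: lD; [exact: lS Lm | exact: lS Am0] | exact: lS Am].
  have v1 : 0 < 1 + v by lra.
  rewrite (FTC_R f0 c1 dF Fp Fm); congr EFin; rewrite /a /b /c; field.
  by rewrite (gt_eqF (@sq_pos R u (1 + v) v1)) (gt_eqF v0) (gt_eqF K0) (gt_eqF p0).
Qed.
Lemma lim_Pinv {R : realType} :
  (fun x : R => (1 + x ^+ 2)^-1) x @[x --> +oo] --> (0:R) /\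
  (fun x : R => (1 + x ^+ 2)^-1) x @[x --> -oo] --> (0:R).
Proof.
pose r := fun y : R => (y * y) * (y * y + 1)^-1.
have r0 : r 0 = 0 by rewrite /r !mul0r.
have cr : {for 0, continuous r}.
  have nz : (fun y : R => y * y + 1) 0 != 0 by rewrite /= mul0r add0r oner_neq0.
  exact: der_cont (dM (dM (dI 0) (dI 0)) (dV (f := fun y : R => y * y + 1) nz (dD (dM (dI 0) (dI 0)) (dC 1 0)))).
have := @lim_inv R r (fun x : R => (1 + x ^+ 2)^-1) cr.
rewrite r0; apply => x x0; rewrite /r; field.
by rewrite x0 -expr2 gt_eqF // P_pos.
Qed.

Lemma K_pos {R : realType} (u v : R) : 0 < v -> ~~ ((u == 0) && (v == 1)) ->
  0 < (u ^+ 2 + v ^+ 2 - 1) ^+ 2 + 4 * u ^+ 2.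
Proof.
move=> v0 hK.
have h1 := sqr_ge0 (u ^+ 2 + v ^+ 2 - 1); have h2 := sqr_ge0 u.
case: (eqVneq u 0) => [u0|u0].
+ have v1 : v != 1 by move: hK; rewrite u0 eqxx.
  have : 0 < (u ^+ 2 + v ^+ 2 - 1) ^+ 2.
    rewrite exprn_even_gt0 //= u0 expr0n add0r subr_eq0.
    by rewrite -(expr1n R 2) eqrXn2 // ltW.
  lra.
+ have : 0 < u ^+ 2 by rewrite exprn_even_gt0 //= u0.
  lra.
Qed.

Lemma int2 {R : realType} (u v : R) : 0 < v ->
  cauchy_int (fun x => (u - x) / ((u - x) ^+ 2 + v ^+ 2)) = u / (u ^+ 2 + (1 + v) ^+ 2).
Proof.
move=> v0; rewrite /cauchy_int /cauchy_density.
have c2 := @cont_f2 R u v v0.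
have cd0 := @cont_dens R.
have [Ap0 Am0] := @atan_lims0 R.
have [Ap Am] := @atan_lims R u v v0.
have pi0 : 0 < pi :> R by exact: pi_gt0.
move: c2 cd0 Ap0 Am0 Ap Am pi0; generalize (@pi R) => p c2 cd0 Ap0 Am0 Ap Am p0.
pose cc := (2 * v)^-1.
have h0 : forall x : R, 0 <= (u - x) / ((u - x) ^+ 2 + v ^+ 2) * (p^-1 / (1 + x ^+ 2)) + cc * (p^-1 / (1 + x ^+ 2)).
  move=> x.
  have -> : (u - x) / ((u - x) ^+ 2 + v ^+ 2) * (p^-1 / (1 + x ^+ 2)) + cc * (p^-1 / (1 + x ^+ 2)) =
    (u - x + v) ^+ 2 / (2 * v * ((u - x) ^+ 2 + v ^+ 2)) * (p^-1 / (1 + x ^+ 2)).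
    rewrite /cc; field.
    by rewrite (gt_eqF (P_pos x)) (gt_eqF p0) (gt_eqF (@sq_pos R (u - x) v v0)) (gt_eqF v0).
  apply: mulr_ge0; last by apply: divr_ge0; [rewrite invr_ge0 ltW | exact: ltW (P_pos x)].
  apply: divr_ge0; first exact: sqr_ge0.
  by apply: ltW; apply: mulr_gt0; [lra | exact: sq_pos].
have d0 : forall x : R, 0 <= cc * (p^-1 / (1 + x ^+ 2)).
  move=> x; apply: mulr_ge0; first by rewrite /cc invr_ge0; lra.
  by apply: divr_ge0; [rewrite invr_ge0 ltW | exact: ltW (P_pos x)].
have cd : continuous (fun x : R => cc * (p^-1 / (1 + x ^+ 2))).
  by move=> x; apply: (@continuousM _ _ (fun _ => cc) _ x); [exact: cvg_cst | exact: cd0].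
pose D := fun x : R => cc * (p^-1 * atan x).
have dDD : forall x : R, is_derive x 1 D (cc * (p^-1 / (1 + x ^+ 2))).
  move=> x; eapply dE; first exact (dS cc (dS p^-1 (dAt (dI x)))).
  by rewrite /= mul1r.
have D1 : D x @[x --> +oo] --> cc * (p^-1 * (p / 2)) by apply: lS; apply: lS; exact: Ap0.
have D2 : D x @[x --> -oo] --> cc * (p^-1 * - (p / 2)) by apply: lS; apply: lS; exact: Am0.
case: (boolP ((u == 0) && (v == 1))) => [/andP[/eqP u0 /eqP v1] | hK].
- subst u v.
  have [Lp Lm] := @lim_Pinv R.
  pose G := fun x : R => p^-1 * (2^-1 * (1 + x ^+ 2)^-1) + D x.
  have dG : forall x : R, is_derive x 1 G
      ((0 - x) / ((0 - x) ^+ 2 + 1 ^+ 2) * (p^-1 / (1 + x ^+ 2)) + cc * (p^-1 / (1 + x ^+ 2))).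
    move=> x.
    have nz : (fun y : R => 1 + y ^+ 2) x != 0 by rewrite /= gt_eqF // P_pos.
    eapply dE; first exact (dD (dS p^-1 (dS 2^-1 (dV (f := fun y : R => 1 + y ^+ 2) nz (dD (dC 1 x) (dX2 (dI x)))))) (dDD x)).
    by rewrite /= /cc; field; rewrite nz gt_eqF.
  have G1 : G x @[x --> +oo] --> p^-1 * (2^-1 * 0) + cc * (p^-1 * (p / 2)).
    by rewrite /G; apply: lD => //; apply: lS; apply: lS; exact: Lp.
  have G2 : G x @[x --> -oo] --> p^-1 * (2^-1 * 0) + cc * (p^-1 * - (p / 2)).
    by rewrite /G; apply: lD => //; apply: lS; apply: lS; exact: Lm.
  by rewrite (FTC_Rs h0 d0 c2 cd dG dDD G1 G2 D1 D2) /cc; field; rewrite gt_eqF.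
- have K0 := @K_pos R u v v0 hK.
  pose a := (u ^+ 2 - v ^+ 2 + 1) / (2 * ((u ^+ 2 + v ^+ 2 - 1) ^+ 2 + 4 * u ^+ 2)).
  pose b := u * (u ^+ 2 + v ^+ 2 + 1) / ((u ^+ 2 + v ^+ 2 - 1) ^+ 2 + 4 * u ^+ 2).
  pose c := - (2 * u * v) / ((u ^+ 2 + v ^+ 2 - 1) ^+ 2 + 4 * u ^+ 2).
  have [Lp Lm] := @lnratio_lims R u v v0.
  pose G := fun x : R => p^-1 * (a * (ln (1 + x ^+ 2) - ln ((x - u) ^+ 2 + v ^+ 2)) + b * atan x + c * atan ((x - u) / v)) + D x.
  have dG : forall x : R, is_derive x 1 G
      ((u - x) / ((u - x) ^+ 2 + v ^+ 2) * (p^-1 / (1 + x ^+ 2)) + cc * (p^-1 / (1 + x ^+ 2))).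
    move=> x.
    have hxu := dB (dI x) (dC u x).
    have hP := dLn (f := fun y => 1 + y ^+ 2) (P_pos x) (dD (dC 1 x) (dX2 (dI x))).
    have hQ := dLn (f := fun y => (y - u) ^+ 2 + v ^+ 2) (sq_pos (x - u) v0) (dD (dX2 hxu) (dC (v ^+ 2) x)).
    have h1 := dAt (dI x).
    have h2 := dAt (dM hxu (dC v^-1 x)).
    eapply dE; first exact (dD (dS p^-1 (dD (dD (dS a (dB hP hQ)) (dS b h1)) (dS c h2))) (dDD x)).
    rewrite /= /a /b /c /cc; field.
    by rewrite (gt_eqF (P_pos x)) (gt_eqF p0) (gt_eqF (sq_pos (u - x) v0)) (gt_eqF v0) (gt_eqF K0).
  have G1 : G x @[x --> +oo] --> p^-1 * (a * 0 + b * (p / 2) + c * (p / 2)) + cc * (p^-1 * (p / 2)).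
    rewrite /G; apply: lD => //.
    apply: lS; apply: lD; [apply: lD; [exact: lS Lp | exact: lS Ap0] | exact: lS Ap].
  have G2 : G x @[x --> -oo] --> p^-1 * (a * 0 + b * - (p / 2) + c * - (p / 2)) + cc * (p^-1 * - (p / 2)).
    rewrite /G; apply: lD => //.
    apply: lS; apply: lD; [apply: lD; [exact: lS Lm | exact: lS Am0] | exact: lS Am].
  have v1 : 0 < 1 + v by lra.
  rewrite (FTC_Rs h0 d0 c2 cd dG dDD G1 G2 D1 D2) /a /b /c /cc; field.
  by rewrite (gt_eqF (@sq_pos R u (1 + v) v1)) (gt_eqF v0) (gt_eqF K0) (gt_eqF p0).
Qed.
Definition sg {R : realType} (t v : R) : R := t * (1 + v) / v - (1 + v) ^+ 2.
Definition ph {R : realType} (t s : R) : R := inf [set v : R | 0 < v /\ sg t v <= s].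

Lemma sg_der {R : realType} (t v : R) : 0 < v ->
  is_derive v 1 (sg t) (- t / v^+2 - 2 * (1+v)).
Proof.
move=> v0.
have h1 : is_derive v 1 (fun x : R => t * (1 + x)) (t * (0 + 1) + (1 + v) * 0).
  by apply: dM.
have h2 : is_derive v 1 (fun x : R => x^-1) (- 1 / v ^+ 2).
  by apply: dV; rewrite ?gt_eqF.
have h3 := dM h1 h2.
have h4 : is_derive v 1 (fun x : R => (1 + x) ^+ 2) ((1 + v) * (0 + 1) + (1 + v) * (0 + 1)).
  have e : (fun x : R => (1 + x) ^+ 2) = (fun x => (1 + x) * (1 + x)).
    by apply: funext => x; rewrite expr2.
  by rewrite e; apply: dM.
eapply dE; first exact (dB h3 h4).
field; by rewrite gt_eqF.
Qed.

Lemma sg_decr {R : realType} (t a b : R) : 0 < t -> 0 < a -> a < b -> sg t b < sg t a.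
Proof.
move=> t0 a0 ab; have b0 : 0 < b by apply: lt_trans ab.
rewrite -subr_gt0.
have -> : sg t a - sg t b = (b - a) * (t / (a * b) + 2 + a + b).
  by rewrite /sg; field; rewrite ?gt_eqF.
apply: mulr_gt0; first by rewrite subr_gt0.
have : 0 < t / (a * b) by apply: divr_gt0 => //; apply: mulr_gt0.
lra.
Qed.

Lemma sg_cont {R : realType} (t a b : R) : 0 < a -> {within `[a, b], continuous (sg t)}.
Proof.
move=> a0; apply: derivable_within_continuous => x; rewrite in_itv /= => /andP[ax _].
apply: ex_derive; apply: sg_der; exact: lt_le_trans ax.
Qed.

Lemma sg_root {R : realType} (t s : R) : 0 < t -> exists2 w, 0 < w & sg t w = s.
Proof.
move=> t0.
have s0 : 0 <= `|s| by [].
have hs : - `|s| <= s <= `|s| by rewrite -ler_norml.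
set a := t / (`|s| + t + 4).
set b := 2 * t + `|s| + 1.
have a0 : 0 < a by apply: divr_gt0 => //; lra.
have a1 : a < 1 by rewrite /a ltr_pdivrMr; lra.
have ea : t * (1 + a) / a = `|s| + 2 * t + 4.
  rewrite /a; field; apply/andP; split; rewrite gt_eqF //; lra.
have sa : s <= sg t a by rewrite /sg ea; nra.
have b1 : 1 <= b by rewrite /b; lra.
have eb : t * (1 + b) / b <= 2 * t by rewrite ler_pdivrMr; nra.
have sb : sg t b <= s.
  have bb : 1 + b <= (1 + b) ^+ 2 by rewrite expr2; nra.
  rewrite /sg; move: bb eb; rewrite /b; lra.
have ab : a <= b by lra.
have hI : Num.min (sg t a) (sg t b) <= s <= Num.max (sg t a) (sg t b).
  by apply/andP; split; [rewrite ge_min sb orbT | rewrite le_max sa].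
have [c cab hc] := IVT ab (@sg_cont R t a b a0) hI.
exists c => //; move: cab; rewrite in_itv /= => /andP[ac _]; exact: lt_le_trans ac.
Qed.

Lemma ph_eq {R : realType} (t s w : R) : 0 < t -> 0 < w -> sg t w = s -> ph t s = w.
Proof.
move=> t0 w0 hw; rewrite /ph.
have -> : [set v : R | 0 < v /\ sg t v <= s] = [set v | w <= v].
  apply/seteqP; split => v /=.
  - case=> v0 hv; rewrite leNgt; apply/negP => vw.
    by move: (sg_decr t0 v0 vw); rewrite hw; lra.
  - move=> wv; split; first exact: lt_le_trans wv.
    rewrite -hw; move: wv; rewrite le_eqVlt => /orP[/eqP -> //|wv].
    exact/ltW/sg_decr.
apply/eqP; rewrite eq_le; apply/andP; split.
- apply: (ge_inf (E := [set v | w <= v])) => //=; exists w => y /=; done.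
- by apply: lb_le_inf; [exists w => /= | move=> y].
Qed.

Lemma ph_pos {R : realType} (t s : R) : 0 < t -> 0 < ph t s /\ sg t (ph t s) = s.
Proof.
move=> t0; have [w w0 hw] := @sg_root R t s t0.
by rewrite (ph_eq t0 w0 hw).
Qed.
Lemma key_ineq {R : realType} (t u v : R) : 0 < t -> 0 < v ->
  ((1 + v) / (v * (u ^+ 2 + (1 + v) ^+ 2)) <= t^-1) = (sg t v <= u ^+ 2).
Proof.
move=> t0 v0.
have Q0 : 0 < u ^+ 2 + (1 + v) ^+ 2.
  have : 0 < (1 + v) ^+ 2 by apply: exprn_gt0; lra.
  have : 0 <= u ^+ 2 by apply: sqr_ge0.
  lra.
rewrite -subr_le0 -[X in _ = X]subr_le0.
have -> : (1 + v) / (v * (u ^+ 2 + (1 + v) ^+ 2)) - t^-1 =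
  (sg t v - u ^+ 2) / (t * (u ^+ 2 + (1 + v) ^+ 2)).
  by rewrite /sg; field; rewrite ?gt_eqF.
by rewrite ler_pdivrMr ?mul0r // mulr_gt0.
Qed.

Lemma main_of {R : realType} (t : R) (ht : 0 < t) (u : R)
  (H1 : forall u v : R, 0 < v ->
     cauchy_eint (fun x => ((u - x) ^+ 2 + v ^+ 2)^-1) =
     ((1 + v) / (v * (u ^+ 2 + (1 + v) ^+ 2)))%:E)
  (H2 : forall u v : R, 0 < v ->
     cauchy_int (fun x => (u - x) / ((u - x) ^+ 2 + v ^+ 2)) =
     u / (u ^+ 2 + (1 + v) ^+ 2)) :
  is_derive u 1 (psi t)
    ((t + 4 * vt t u ^+ 2 * (1 + vt t u) ^+ 2) /
     ((1 + vt t u) * (t + 2 * vt t u ^+ 2 * (1 + vt t u)))).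
Proof.
have vtE : forall y, vt t y = ph t (y ^+ 2).
  move=> y; rewrite /vt /ph; congr inf; apply/seteqP; split=> v /= [v0 hv]; split=> //.
    by move: hv; rewrite H1 // lee_fin key_ineq.
  by rewrite H1 // lee_fin key_ineq.
have psiE : psi t = fun y => y * ((1 + 2 * ph t (y * y)) / (1 + ph t (y * y))).
  apply: funext => y; rewrite /psi H2 vtE; last by case: (ph_pos (y ^+ 2) ht).
  have [p0 ps] := ph_pos (y ^+ 2) ht.
  rewrite -expr2.
  set w := ph t (y ^+ 2) in p0 ps *.
  have eQ : y ^+ 2 + (1 + w) ^+ 2 = t * (1 + w) / w by rewrite -ps /sg; ring.
  rewrite eQ; field; rewrite ?gt_eqF //; lra.
rewrite psiE vtE.
have [w0 ws] := ph_pos (u ^+ 2) ht.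
set w := ph t (u ^+ 2) in w0 ws *.
set l := - t / w ^+ 2 - 2 * (1 + w).
have l0 : l < 0.
  have : 0 < t / w ^+ 2 by apply: divr_gt0 => //; apply: exprn_gt0.
  rewrite /l; lra.
have hph : is_derive (u * u) 1 (ph t) l^-1.
  rewrite -expr2 -ws.
  apply: is_derive_inverse.
  - near=> z; apply: ph_eq => //; near: z; exact: lt_nbhsr.
  - near=> z; apply: differentiable_continuous; apply/derivable1_diffP.
    apply: ex_derive; apply: sg_der; near: z; exact: lt_nbhsr.
  - exact: sg_der.
  - by rewrite lt_eqF.
have hq : is_derive u 1 (fun y => ph t (y * y)) (l^-1 * (u * 1 + u * 1)).
  apply: dO => //; by apply: dM.
have n0 : 1 + ph t (u * u) != 0 by rewrite -expr2 -/w gt_eqF //; lra.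
have hk := dM (dD (dC 1 u) (dM (dC 2 u) hq)) (dV (f := fun y => 1 + ph t (y * y)) n0 (dD (dC 1 u) hq)).
eapply dE; first exact (dM (dI u) hk).
rewrite /= -expr2 -/w; clearbody w.
have w1 : 0 < 1 + w by lra.
have -> : u * ((1 + 2 * w) * (- (0 + l^-1 * (u * 1 + u * 1)) / (1 + w) ^+ 2) +
   (1 + w)^-1 * (0 + (2 * (l^-1 * (u * 1 + u * 1)) + w * 0))) +
  (1 + 2 * w) / (1 + w) * 1 = (1 + 2 * w) / (1 + w) + u ^+ 2 * (2 / (l * (1 + w) ^+ 2)).
  by field; rewrite gt_eqF // lt_eqF.
rewrite -ws /sg /l.
have hw2 : 0 < w ^+ 2 by apply: exprn_gt0.
have p1 : 0 < w ^+ 2 * (1 + w) by apply: mulr_gt0.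
field; apply/and4P; split; [rewrite gt_eqF //| rewrite gt_eqF // | rewrite gt_eqF // | rewrite lt_eqF //]; nra.
Unshelve. all: by end_near.
Qed.

Theorem proposition6p4 (R : realType) (t : R) (ht : 0 < t) (u : R) :
  is_derive u 1 (psi t)
    ((t + 4 * vt t u ^+ 2 * (1 + vt t u) ^+ 2) /
     ((1 + vt t u) * (t + 2 * vt t u ^+ 2 * (1 + vt t u)))).
Proof.
exact: (@main_of R t ht u (fun u v hv => @eint1 R u v hv) (fun u v hv => @int2 R u v hv)).
Qed.
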